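(* For every cap-cup cycle $c$ with $T(c) = \pm 2$, there exists a knot diagram $f \in \mathbb{CC}$ whose string diagram has no crossings (braidings) and such that $\mathrm{ccc}(f) = c$.
   Context: $\mathbb{CC}$ is the free (strict) braided monoidal category generated by objects $\uparrow, \downarrow$ and four generating morphisms, with no equations imposed between them: caps $\mathrm{cap}_r : I \to \uparrow \otimes \downarrow$, $\mathrm{cap}_l : I \to \downarrow \otimes \uparrow$ and cups $\mathrm{cup}_r : \downarrow \otimes \uparrow \to I$, $\mathrm{cup}_l : \uparrow \otimes \downarrow \to I$. Wires labelled $\uparrow$ / $\downarrow$ are regarded as oriented (upwards/downwards), so a morphism is an oriented diagram. A knot (diagram) in $\mathbb{CC}$ is a morphism $I \to I$ whose string diagram has a single connected component. The turning numbers of the generators are $t(\mathrm{cap}_r) = +1$, $t(\mathrm{cap}_l) = -1$, $t(\mathrm{cup}_r) = -1$, $t(\mathrm{cup}_l) = +1$. A cap-cup cycle is a finite sequence of elements of $\{\mathrm{cap}_l, \mathrm{cap}_r, \mathrm{cup}_l, \mathrm{cup}_r\}$, considered up to cyclic permutation, in which caps and cups alternate; its turning number $T(c)$ is the sum of the turning numbers of its elements. For a knot $f \in \mathbb{CC}$, its cap-cup cycle $\mathrm{ccc}(f)$ is obtained by starting at any point of the strand, following the strand in the direction given by its orientation, and recording the caps and cups encountered until returning to the start. *)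

(* Defs.v *)
From mathcomp Require Import all_boot all_order all_algebra.
Set Implicit Arguments. Unset Strict Implicit. Unset Printing Implicit Defensive.
Import GRing.Theory.

(* Objects of CC: words in the two generating objects (up / down). *)
Inductive ori := Up | Down.
Definition ori_eqb (a b : ori) : bool :=
  match a, b with Up, Up | Down, Down => true | _, _ => false end.

Inductive gen := cap_r | cap_l | cup_r | cup_l.

Definition is_cap (g : gen) : bool :=
  match g with cap_r | cap_l => true | _ => false end.

Definition gdom (g : gen) : seq ori :=
  match g with cup_r => [:: Down; Up] | cup_l => [:: Up; Down] | _ => [::] end.
Definition gcod (g : gen) : seq ori :=
  match g with cap_r => [:: Up; Down] | cap_l => [:: Down; Up] | _ => [::] end.

Definition tn (g : gen) : int :=
  match g with cap_r => 1 | cap_l => -1 | cup_r => -1 | cup_l => 1 end.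

(* String diagrams of the free strict braided monoidal category CC, written as a
   vertical composite (bottom to top) of layers  id_u (x) b (x) id_v,  where b is
   a generator, a braiding, or an inverse braiding; k = size u is the offset. *)
Inductive layer :=
  | LGen of nat & gen
  | LBraid of nat
  | LBraidInv of nat.

Definition diagram := seq layer.

Definition is_crossing (l : layer) : bool :=
  match l with LGen _ _ => false | _ => true end.
Definition crossing_free (f : diagram) : bool := ~~ has is_crossing f.

(* A leg of a generator occurrence: (index of its layer in f, false = left / true = right). *)
Definition leg := (nat * bool)%type.
(* A wire at some height: its orientation and the leg of the cap that created it. *)
Definition wire := (ori * leg)%type.
(* A link records that a wire joins two legs (the creating cap leg and the
   consuming cup leg). *)
Definition link := (leg * leg)%type.

Definition step (i : nat) (l : layer) (st : seq wire * seq link)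
  : option (seq wire * seq link) :=
  let (w, ls) := st in
  match l with
  | LGen k g =>
      if is_cap g then
        if k <= size w then
          Some (take k w ++ [seq (o, (i, j == 1%N)) | '(o, j) <- zip (gcod g) (iota 0 2)]
                ++ drop k w, ls)
        else None
      else
        match drop k w, gdom g with
        | (a, la) :: (b, lb) :: rest, [:: a'; b'] =>
            if ori_eqb a a' && ori_eqb b b' then
              Some (take k w ++ rest, (la, (i, false)) :: (lb, (i, true)) :: ls)
            else None
        | _, _ => None
        end
  | LBraid k | LBraidInv k =>
      match drop k w with
      | x :: y :: rest => Some (take k w ++ y :: x :: rest, ls)
      | _ => None
      end
  end.

Fixpoint run (i : nat) (f : diagram) (st : seq wire * seq link)
  : option (seq wire * seq link) :=
  match f with
  | [::] => Some st
  | l :: f' => match step i l st with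
               | Some st' => run i.+1 f' st'
               | None => None
               end
  end.

Definition endo_I (f : diagram) : bool :=
  match run 0 f ([::], [::]) with Some ([::], _) => true | _ => false end.

Definition links (f : diagram) : seq link :=
  match run 0 f ([::], [::]) with Some (_, ls) => ls | None => [::] end.

Definition leg_eqb (a b : leg) : bool := (a.1 == b.1) && (a.2 == b.2).

Definition partner (f : diagram) (a : leg) : leg :=
  let ls := links f in
  match [seq p <- ls | leg_eqb p.1 a || leg_eqb p.2 a] with
  | p :: _ => if leg_eqb p.1 a then p.2 else p.1
  | [::] => a
  end.

Definition is_gen_layer (l : layer) : bool := ~~ is_crossing l.
Definition gen_at (f : diagram) (i : nat) : gen :=
  match nth (LBraid 0) f i with LGen _ g => g | _ => cap_r end.

(* the leg through which the oriented strand leaves a generator *)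
Definition out_leg (g : gen) : bool :=
  match g with cap_r => false | cap_l => true | cup_r => false | cup_l => true end.

Definition next_gen (f : diagram) (i : nat) : nat :=
  (partner f (i, out_leg (gen_at f i))).1.

Definition ngens (f : diagram) : nat := count is_gen_layer f.
Definition first_gen (f : diagram) : nat := find is_gen_layer f.

Definition strand (f : diagram) : seq nat :=
  traject (next_gen f) (first_gen f) (ngens f).

(* a knot diagram: a morphism I -> I whose string diagram is connected
   (the strand through one generator visits all generators) and nonempty *)
Definition is_knot (f : diagram) : Prop :=
  [/\ endo_I f, 0 < ngens f & uniq (strand f)].

(* the cap-cup cycle of a knot (a representative, up to rotation) *)
Definition ccc (f : diagram) : seq gen := map (gen_at f) (strand f).

Definition is_ccycle (c : seq gen) : Prop :=
  forall i, i < size c ->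
    is_cap (nth cap_r c i) != is_cap (nth cap_r c (i.+1 %% size c)).

Definition turning (c : seq gen) : int := \sum_(g <- c) tn g.

Definition cyc_eq (c d : seq gen) : Prop := exists k, c = rot k d.

(* Main.v *)
Require Import Defs.
From mathcomp Require Import all_boot all_order all_algebra.
From mathcomp Require Import zify.
Set Implicit Arguments. Unset Strict Implicit. Unset Printing Implicit Defensive.

Lemma run_cat i f1 f2 st :
  run i (f1 ++ f2) st =
  match run i f1 st with Some st' => run (i + size f1) f2 st' | None => None end.
Proof.
elim: f1 i st => [|l f1 IH] i st /=; first by rewrite addn0.
case: (step i l st) => [st'|//]; by rewrite IH addSnnS.
Qed.

Definition appls (ls : seq link) (o : option (seq wire * seq link)) :=
  match o with Some (w, ls') => Some (w, ls' ++ ls) | None => None end.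

Lemma step_ls i l w ls1 ls : step i l (w, ls1 ++ ls) = appls ls (step i l (w, ls1)).
Proof.
case: l => [k g|k|k] /=.
- case: (is_cap g); first by case: ifP.
  case: (drop k w) => [|[a la] [|[b lb] rest]] //.
  case: (gdom g) => [|a' [|b' [|]]] //; by case: ifP.
- by case: (drop k w) => [|x [|y r]].
- by case: (drop k w) => [|x [|y r]].
Qed.

Local Arguments step : simpl never.
Lemma run_ls i f w ls1 ls : run i f (w, ls1 ++ ls) = appls ls (run i f (w, ls1)).
Proof.
elim: f i w ls1 => [|l f IH] i w ls1 //=.
rewrite step_ls; case: (step i l (w, ls1)) => [[w' ls']|] //=; by rewrite IH.
Qed.

Definition mapW (r : leg -> leg) (w : seq wire) : seq wire := [seq (x.1, r x.2) | x <- w].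
Definition mapL (r : leg -> leg) (ls : seq link) : seq link := [seq (r x.1, r x.2) | x <- ls].
Definition relab r (o : option (seq wire * seq link)) :=
  match o with Some (w, ls) => Some (mapW r w, mapL r ls) | None => None end.

Lemma step_relab r d i l w ls :
  (forall b, r (i, b) = (i + d, b)) ->
  step (i + d) l (mapW r w, mapL r ls) = relab r (step i l (w, ls)).
Proof.
move=> Hr; case: l => [k g|k|k]; rewrite /step.
- case: g => /=.
  + rewrite /mapW size_map; case: ifP => //= _; by rewrite /mapW /= !map_cat map_take /= map_drop !Hr.
  + rewrite /mapW size_map; case: ifP => //= _; by rewrite /mapW /= !map_cat map_take /= map_drop !Hr.
  + rewrite /mapW -map_drop; case: (drop k w) => [|[a la] [|[b lb] rest]] //=;
    case: ifP => //= _; by rewrite /mapW map_cat map_take !Hr.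
  + rewrite /mapW -map_drop; case: (drop k w) => [|[a la] [|[b lb] rest]] //=;
    case: ifP => //= _; by rewrite /mapW map_cat map_take !Hr.
- by rewrite /mapW -map_drop; case: (drop k w) => [|x [|y rr]] //=; rewrite /mapW map_cat map_take.
- by rewrite /mapW -map_drop; case: (drop k w) => [|x [|y rr]] //=; rewrite /mapW map_cat map_take.
Qed.

Local Arguments step : simpl never.
Lemma run_relab r d f i w ls :
  (forall n b, i <= n -> r (n, b) = (n + d, b)) ->
  run (i + d) f (mapW r w, mapL r ls) = relab r (run i f (w, ls)).
Proof.
elim: f i w ls => [|l f IH] i w ls Hr //=.
rewrite step_relab; last by move=> b; apply: Hr.
case: (step i l (w, ls)) => [[w' ls']|] //=.
rewrite -addSn IH // => n b Hn; apply: Hr; exact: ltnW.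
Qed.

Definition Inv i (st : seq wire * seq link) :=
  all (fun x : wire => x.2.1 < i) st.1 &&
  all (fun p : link => (p.1.1 < i) && (p.2.1 < i)) st.2.

Lemma all_takedrop T (a : pred T) k s : all a s = all a (take k s) && all a (drop k s).
Proof. by rewrite -all_cat cat_take_drop. Qed.

Lemma Inv_mono i j st : i <= j -> Inv i st -> Inv j st.
Proof.
rewrite /Inv => ij /andP[H1 H2]; apply/andP; split.
- by apply: sub_all H1 => x /leq_trans; apply.
- by apply: sub_all H2 => x /andP[a b]; apply/andP; split; exact: leq_trans ij.
Qed.

Lemma step_inv i l st st' : Inv i st -> step i l st = Some st' -> Inv i.+1 st'.
Proof.
case: st => w ls /(Inv_mono (leqnSn i)); rewrite /Inv => /andP[/= Hw Hl].
rewrite /step; case: l => [k g|k|k].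
- case: (is_cap g).
  + case: ifP => // _ [<-]; apply/andP; split => //=.
    move: Hw; rewrite (all_takedrop _ k) !all_cat => /andP[-> ->] /=.
    by case: g => /=; rewrite ?ltnSn.
  + move: Hw; rewrite (all_takedrop _ k) => /andP[Ht].
    case: (drop k w) => [|[a la] [|[b lb] rest]] //=.
    case/and3P=> Ha Hb Hr.
    case: (gdom g) => [|a' [|b' [|]]] //; case: ifP => // _ [<-].
    apply/andP; split => /=; first by rewrite all_cat Ht Hr.
    by rewrite Ha Hb Hl ltnSn.
- move: Hw; rewrite (all_takedrop _ k) => /andP[Ht].
  case: (drop k w) => [|x [|y rr]] //= /and3P[Hx Hy Hr] [<-].
  by apply/andP; split => //=; rewrite all_cat Ht /= Hx Hy Hr.
- move: Hw; rewrite (all_takedrop _ k) => /andP[Ht].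
  case: (drop k w) => [|x [|y rr]] //= /and3P[Hx Hy Hr] [<-].
  by apply/andP; split => //=; rewrite all_cat Ht /= Hx Hy Hr.
Qed.

Lemma run_inv i f st st' : Inv i st -> run i f st = Some st' -> Inv (i + size f) st'.
Proof.
elim: f i st => [|l f IH] i st /=; first by rewrite addn0 => H [<-].
case E: (step i l st) => [st1|] // H; rewrite addnS -addSn.
apply: IH; exact: step_inv E.
Qed.


Definition lk (ls : seq link) (a : leg) : leg :=
  match [seq p <- ls | leg_eqb p.1 a || leg_eqb p.2 a] with
  | p :: _ => if leg_eqb p.1 a then p.2 else p.1
  | [::] => a
  end.

Lemma partner_lk f a : partner f a = lk (links f) a.
Proof. by []. Qed.

Lemma leg_eqbE (a b : leg) : leg_eqb a b = (a == b).
Proof. by case: a b => [? ?] [? ?]; rewrite xpair_eqE. Qed.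

Lemma lk_map r ls a : injective r -> lk (mapL r ls) (r a) = r (lk ls a).
Proof.
move=> ri; rewrite /lk /mapL filter_map.
rewrite (@eq_filter _ _ (fun p => leg_eqb p.1 a || leg_eqb p.2 a)); last first.
  by move=> p /=; rewrite !leg_eqbE !(inj_eq ri).
case: [seq p <- ls | _] => [|p q] //=.
by rewrite !leg_eqbE (inj_eq ri); case: ifP.
Qed.

Lemma lk_miss A B a : [seq p <- A | leg_eqb p.1 a || leg_eqb p.2 a] = [::] ->
  lk (A ++ B) a = lk B a.
Proof. by move=> H; rewrite /lk filter_cat H. Qed.

Lemma lk_hit A B a : [seq p <- A | leg_eqb p.1 a || leg_eqb p.2 a] != [::] ->
  lk (A ++ B) a = lk A a.
Proof. by rewrite /lk filter_cat; case: [seq p <- A | _]. Qed.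

Lemma mapL_fix r B : (forall p, p \in B -> r p.1 = p.1 /\ r p.2 = p.2) -> mapL r B = B.
Proof.
move=> H; rewrite /mapL; apply: map_id_in => p /H [-> ->]; by case: p.
Qed.

Definition sh j n := if n <= j then n else n.+2.

Lemma sh_inj j : injective (sh j).
Proof. move=> x y; rewrite /sh; case: ifP; case: ifP; lia. Qed.
Lemma sh_neq1 j n : sh j n != j.+1.
Proof. rewrite /sh; case: ifP; lia. Qed.
Lemma sh_neq2 j n : sh j n != j.+2.
Proof. rewrite /sh; case: ifP; lia. Qed.
Lemma sh_eqj j n : sh j n = j -> n = j.
Proof. rewrite /sh; case: ifP; lia. Qed.
Lemma sh_lt j n m : n < m -> sh j n < m.+2.
Proof. rewrite /sh; case: ifP; lia. Qed.

Definition rho j (l : leg) (t : bool) (a : leg) : leg :=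
  if a == l then (j.+1, t) else (sh j a.1, a.2).

Lemma rho_inj j l t : l.1 = j -> injective (rho j l t).
Proof.
move=> hl a b; rewrite /rho.
case: eqP => [->|na]; case: eqP => [->|nb] //.
- case=> E _; have := sh_neq1 j b.1; by rewrite -E eqxx.
- case=> E _; have := sh_neq1 j a.1; by rewrite E eqxx.
- case: a b na nb => [a1 a2] [b1 b2] /= _ _ [/sh_inj -> ->] //.
Qed.

Lemma rho_big j l t n b : l.1 = j -> j < n -> rho j l t (n, b) = (n + 2, b).
Proof.
move=> hl jn; rewrite /rho; case: eqP => [E|_].
  by move: jn; rewrite -hl -E /= ltnn.
by rewrite /sh /= leqNgt jn addn2.
Qed.

Lemma rho_l j l t : rho j l t l = (j.+1, t).
Proof. by rewrite /rho eqxx. Qed.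

Lemma rho_other j l t a : a != l -> rho j l t a = (sh j a.1, a.2).
Proof. by rewrite /rho => /negbTE ->. Qed.

Lemma rho_nl j l t a : l.1 = j -> rho j l t a != l.
Proof.
move=> hl; rewrite /rho; case: (a =P l) => [_|na].
  by rewrite -hl; case: l {hl} => l1 l2 /=; rewrite xpair_eqE; apply/nandP; left; lia.
apply/eqP => E; apply: na; rewrite -hl in E; case: a E => a1 a2; case: l {hl} => l1 l2 /= [/sh_eqj -> ->] //.
Qed.

Lemma rho_n1 j l t a : rho j l t a != (j.+1, ~~ t).
Proof.
rewrite /rho; case: (a =P l) => _; rewrite xpair_eqE.
  by case: t; rewrite eqxx.
by rewrite (negbTE (sh_neq1 _ _)).
Qed.

Lemma rho_n2 j l t a b : l.1 = j -> rho j l t a != (j.+2, b).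
Proof.
move=> hl; rewrite /rho; case: (a =P l) => _; rewrite xpair_eqE.
  by apply/nandP; left; lia.
by rewrite (negbTE (sh_neq2 _ _)).
Qed.

Definition Ed j (l : leg) (t : bool) : seq link :=
  if t then [:: (l, (j.+2, false)); ((j.+1, false), (j.+2, true))]
  else [:: ((j.+1, true), (j.+2, false)); (l, (j.+2, true))].

Definition ment (x : leg) (p : link) := leg_eqb p.1 x || leg_eqb p.2 x.

Lemma lk_mid A E B x : [seq p <- E | ment x p] = [::] -> lk (A ++ E ++ B) x = lk (A ++ B) x.
Proof. by move=> H; rewrite /lk !filter_cat; rewrite /ment in H; rewrite H. Qed.

Lemma filter_mapL_nil r T x : (forall a, r a != x) -> [seq p <- mapL r T | ment x p] = [::].
Proof.
move=> H; elim: T => //= p T IH; by rewrite /ment !leg_eqbE !(negbTE (H _)) /=.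
Qed.

Lemma Ed_nil j l t a : l.1 = j -> [seq p <- Ed j l t | ment (rho j l t a) p] = [::].
Proof.
move=> hl; have h1 := rho_nl t a hl; have h2 := @rho_n1 j l t a.
have h3 := rho_n2 t a false hl; have h4 := rho_n2 t a true hl.
case: t h1 h2 h3 h4 => h1 h2 h3 h4 /=;
  by rewrite /ment /= !leg_eqbE !(eq_sym _ (rho _ _ _ a)) (negbTE h1) (negbTE h2) (negbTE h3) (negbTE h4).
Qed.

Lemma mapW_fix r (w : seq wire) : all (fun x : wire => r x.2 == x.2) w -> mapW r w = w.
Proof. elim: w => //= [[o x] w IH] /andP[/eqP /= -> /IH ->] //. Qed.

Lemma rho_fix j l t (x : leg) : l.1 = j -> x.1 < j -> rho j l t x = x.
Proof.
move=> hl hx; rewrite rho_other; last by apply/eqP => E; move: hx; rewrite E hl ltnn.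
by rewrite /sh leq_eqVlt hx orbT; case: x {hx}.
Qed.

Section Core.
Variables (f : diagram) (j k : nat) (g : gen) (s : bool) (o : ori) (L1 L2 : layer) (t : bool).
Hypothesis Hend : endo_I f.
Hypothesis Hj : j < size f.
Hypothesis Hlay : nth (LBraid 0) f j = LGen k g.
Hypothesis Hcap : is_cap g.
Hypothesis Ho : nth Up (gcod g) s = o.
Hypothesis Hsn : forall w1 w2 (B : seq link), size w1 = k + s ->
  run j.+1 [:: L1; L2] (w1 ++ (o, (j, s)) :: w2, B) = Some (w1 ++ (o, (j.+1, t)) :: w2, Ed j (j, s) t ++ B).

Let l : leg := (j, s).
Let r := rho j l t.
Let f' := take j.+1 f ++ [:: L1; L2] ++ drop j.+1 f.

Lemma core :
  [/\ endo_I f',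
      forall a, partner f' (r a) = r (partner f a) &
      forall x, (forall a, r a != x) -> [seq p <- Ed j l t | ment x p] != [::] ->
        partner f' x = lk (Ed j l t) x].
Proof.
have hl : l.1 = j by [].
have Ef : f = take j f ++ LGen k g :: drop j.+1 f.
  by rewrite -Hlay -drop_nth ?cat_take_drop.
have Etk : take j.+1 f = take j f ++ [:: LGen k g].
  by rewrite (take_nth (LBraid 0) Hj) Hlay cats1.
have sz0 : size (take j f) = j by rewrite size_take Hj.
move: Hend; rewrite /endo_I /links /f'.
case Erf: (run 0 f _) => [[w Lf]|] //; case: w Erf => [|//] Erf _.
move: Erf; rewrite {1}Ef run_cat sz0 add0n.
case Er0: (run 0 (take j f) _) => [[w0 B0]|] //.
have I0 : Inv j (w0, B0).
  by have := run_inv (isT : Inv 0 ([::], [::])) Er0; rewrite sz0.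
rewrite /= /step Hcap; case: ifP => // kw.
set w := take k w0 ++ _ ++ _.
rewrite -[B0]cat0s run_ls.
case Rt: (run j.+1 _ (w, [::])) => [[wt T]|] //= [Ewt ELf]; subst wt Lf.
have [w1 [w2 [Ew sz1 fix12]]] : exists w1 w2, [/\ w = w1 ++ (o, l) :: w2, size w1 = k + s &
     all (fun x : wire => r x.2 == x.2) (w1 ++ w2)].
  move: I0 => /andP[/= Iw _].
  have fixw0 : all (fun x : wire => r x.2 == x.2) w0.
    by apply: sub_all Iw => x /= hx; rewrite /r rho_fix.
  have fixj : forall b, r (j, b) == (j, b) = (b != s).
    move=> b; rewrite /r /rho /l; case: (b =P s) => [->|ns].
      by rewrite eqxx xpair_eqE (gtn_eqF (ltnSn j)).
    rewrite xpair_eqE eqxx /= (introF eqP ns) /sh leqnn eqxx.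
    by apply/esym/eqP.
  have szt : size (take k w0) = k by rewrite size_take_min; apply/minn_idPl.
  move: fixw0; rewrite (all_takedrop _ k) => /andP[ft fd].
  move: Hcap Ho fixj; rewrite /w /l; case: (g) => // _; case: (s) => /= <- fixj.
  - exists (take k w0 ++ [:: (Up, (j, false))]), (drop k w0).
    by rewrite /w -catA size_cat szt addn1 !all_cat /= ft fd fixj.
  - exists (take k w0), ((Down, (j, true)) :: drop k w0).
    by rewrite /w szt addn0 !all_cat /= ft fd fixj.
  - exists (take k w0 ++ [:: (Down, (j, false))]), (drop k w0).
    by rewrite /w -catA size_cat szt addn1 !all_cat /= ft fd fixj.
  - exists (take k w0), ((Up, (j, true)) :: drop k w0).
    by rewrite /w szt addn0 !all_cat /= ft fd fixj.
have fixB0 : mapL r B0 = B0.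
  apply: mapL_fix => p; move: I0 => /andP[_ /allP IB] /IB /andP[h1 h2].
  by rewrite /r !rho_fix.
have Ew' : w1 ++ (o, (j.+1, t)) :: w2 = mapW r w.
  move: fix12; rewrite all_cat => /andP[/mapW_fix f1 /mapW_fix f2].
  by rewrite Ew /mapW map_cat /= -/(mapW r w1) -/(mapW r w2) f1 f2 /r rho_l.
have Rf' : run 0 (take j.+1 f ++ [:: L1; L2] ++ drop j.+1 f) ([::], [::]) =
           Some ([::], mapL r T ++ Ed j l t ++ B0).
  have Rj : run j [:: LGen k g] (w0, B0) = Some (w, B0) by rewrite /= /step Hcap kw.
  rewrite run_cat Etk run_cat Er0 sz0 add0n Rj size_cat sz0 addn1.
  rewrite run_cat Ew Hsn // Ew' -[Ed j (j, s) t ++ B0]cat0s run_ls.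
  rewrite (_ : [::] = mapL r [::]) // run_relab; last by move=> n b hn; rewrite /r rho_big.
  by rewrite Rt /= catA.
rewrite Rf'; split => //.
- move=> a; rewrite !partner_lk /links Rf' -/f'.
  rewrite (_ : run 0 f _ = Some ([::], T ++ B0)); last first.
    by rewrite Ef run_cat sz0 Er0 add0n /= /step Hcap kw -/w -[B0]cat0s run_ls Rt.
  rewrite lk_mid; last exact: Ed_nil.
  by rewrite -{1}fixB0 -map_cat lk_map //; apply: rho_inj.
- move=> x hx hE; rewrite partner_lk /links Rf' -/f'.
  rewrite /lk filter_cat.
  have := filter_mapL_nil T hx; rewrite /ment => ->.
  by rewrite filter_cat /=; move: hE; rewrite /ment; case: [seq p <- Ed j l t | _].
Qed.
End Core.

Lemma tk1 T (w1 w2 : seq T) x : take (size w1).+1 (w1 ++ x :: w2) = w1 ++ [:: x].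
Proof. by rewrite (_ : w1 ++ x :: w2 = (w1 ++ [:: x]) ++ w2) ?take_size_cat ?size_cat ?addn1 // -catA. Qed.
Lemma dr1 T (w1 w2 : seq T) x : drop (size w1).+1 (w1 ++ x :: w2) = w2.
Proof. by rewrite (_ : w1 ++ x :: w2 = (w1 ++ [:: x]) ++ w2) ?drop_size_cat ?size_cat ?addn1 // -catA. Qed.
Lemma tk0 T (w1 w2 : seq T) : take (size w1) (w1 ++ w2) = w1.
Proof. by rewrite take_size_cat. Qed.
Lemma dr0 T (w1 w2 : seq T) : drop (size w1) (w1 ++ w2) = w2.
Proof. by rewrite drop_size_cat. Qed.
Lemma szle T (w1 w2 : seq T) x : (size w1).+1 <= size (w1 ++ x :: w2).
Proof. by rewrite size_cat /= addnS ltnS leq_addr. Qed.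
Lemma szle0 T (w1 w2 : seq T) : (size w1) <= size (w1 ++ w2).
Proof. by rewrite size_cat leq_addr. Qed.

Lemma snA j w1 w2 x (B : seq link) :
  run j.+1 [:: LGen (size w1).+1 cap_r; LGen (size w1) cup_r] (w1 ++ (Down, x) :: w2, B)
  = Some (w1 ++ (Down, (j.+1, true)) :: w2, Ed j x true ++ B).
Proof.
rewrite /= /step /= szle tk1 dr1 -catA /= dr0 /= tk0.
done.
Qed.

Lemma snB j w1 w2 x (B : seq link) :
  run j.+1 [:: LGen (size w1) cap_l; LGen (size w1).+1 cup_l] (w1 ++ (Down, x) :: w2, B)
  = Some (w1 ++ (Down, (j.+1, false)) :: w2, Ed j x false ++ B).
Proof.
rewrite /= /step /= szle0 tk0 dr0.
by rewrite dr1 tk1 /= -catA.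
Qed.

Lemma snC j w1 w2 x (B : seq link) :
  run j.+1 [:: LGen (size w1).+1 cap_l; LGen (size w1) cup_l] (w1 ++ (Up, x) :: w2, B)
  = Some (w1 ++ (Up, (j.+1, true)) :: w2, Ed j x true ++ B).
Proof.
rewrite /= /step /= szle tk1 dr1 -catA /= dr0 /= tk0.
done.
Qed.

Lemma snD j w1 w2 x (B : seq link) :
  run j.+1 [:: LGen (size w1) cap_r; LGen (size w1).+1 cup_r] (w1 ++ (Up, x) :: w2, B)
  = Some (w1 ++ (Up, (j.+1, false)) :: w2, Ed j x false ++ B).
Proof.
rewrite /= /step /= szle0 tk0 dr0.
by rewrite dr1 tk1 /= -catA.
Qed.

Definition R (f : diagram) (x y : nat) : bool :=
  partner f (x, out_leg (gen_at f x)) == (y, ~~ out_leg (gen_at f y)).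

Definition Good (f : diagram) (c : seq gen) : Prop :=
  all is_gen_layer f /\ endo_I f /\ exists s : seq nat,
    [&& uniq s, size s == size f, 0 \in s, all (fun x => x < size f) s & cycle (R f) s]
    /\ map (gen_at f) s = c.

Lemma path_traj f x p : path (R f) x p -> x :: p = traject (next_gen f) x (size p).+1.
Proof.
elim: p x => [|y p IH] x //= /andP[/eqP H /IH ->].
by rewrite /next_gen H.
Qed.

Lemma Good_concl f c : Good f c -> exists f, [/\ is_knot f, crossing_free f & cyc_eq c (ccc f)].
Proof.
case=> Hall [Hend [s [/and5P[us /eqP ss s0 sb cy] Ec]]].
exists f; have fpos : 0 < size f by rewrite -ss; case: (s) s0.
have Hfg : first_gen f = 0.
  by case: f Hall fpos {ss sb cy Ec Hend} => //= l f' /andP[-> _].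
have Hng : ngens f = size f by apply/eqP; rewrite -all_count.
case/rot_to: s0 => i s' Es.
have cy' : cycle (R f) (0 :: s') by rewrite -Es rot_cycle.
have Hst : strand f = 0 :: s'.
  rewrite /strand Hfg Hng -ss -(size_rot i) Es.
  rewrite (@path_traj f 0 s') ?size_traject //; move: cy'; rewrite /= rcons_path => /andP[]; done.
split.
- split => //; first by rewrite Hng.
  by rewrite Hst -Es rot_uniq.
- by rewrite /crossing_free -all_predC; apply: sub_all Hall.
- exists (size (rot i c) - i).
  rewrite /ccc Hst -Es map_rot Ec.
  by rewrite -[in LHS](rotK i c).
Qed.

Lemma Good_rot f c k : Good f c -> Good f (rot k c).
Proof.
case=> Hall [Hend [s [/and5P[us /eqP ss s0 sb cy] Ec]]].
have ps : perm_eq (rot k s) s by rewrite perm_rot perm_refl.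
split=> //; split=> //; exists (rot k s); split; last by rewrite map_rot Ec.
by rewrite rot_uniq size_rot ss eqxx mem_rot s0 (perm_all _ ps) sb rot_cycle us cy.
Qed.

Lemma Good_rotr f c k : Good f c -> Good f (rotr k c).
Proof. exact: Good_rot. Qed.

Definition ins (f : diagram) j L1 L2 := take j.+1 f ++ [:: L1; L2] ++ drop j.+1 f.

Lemma size_ins f j L1 L2 : j < size f -> size (ins f j L1 L2) = (size f).+2.
Proof. move=> hj; rewrite /ins !size_cat (size_takel hj) size_drop /=; lia. Qed.

Lemma nth_ins_sh f j L1 L2 x : j < size f ->
  nth (LBraid 0) (ins f j L1 L2) (sh j x) = nth (LBraid 0) f x.
Proof.
move=> hj; rewrite /ins /sh; case: (leqP x j) => hx; rewrite nth_cat (size_takel hj).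
  by rewrite ltnS hx nth_take.
rewrite ltnNge ltnW /=; last by lia.
have -> : x.+2 - j.+1 = (x - j.+1).+2 by lia.
rewrite /= nth_drop; congr nth; lia.
Qed.

Lemma gen_at_sh f j L1 L2 x : j < size f -> gen_at (ins f j L1 L2) (sh j x) = gen_at f x.
Proof. by move=> hj; rewrite /gen_at nth_ins_sh. Qed.

Lemma gen_at_1 f j p g L2 : j < size f -> gen_at (ins f j (LGen p g) L2) j.+1 = g.
Proof. by move=> hj; rewrite /gen_at /ins nth_cat (size_takel hj) ltnn subnn. Qed.

Lemma gen_at_2 f j p g L1 : j < size f -> gen_at (ins f j L1 (LGen p g)) j.+2 = g.
Proof. by move=> hj; rewrite /gen_at /ins nth_cat (size_takel hj) ltnNge leqnSn /= subSnn. Qed.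

Lemma all_ins f j L1 L2 : all is_gen_layer f -> is_gen_layer L1 -> is_gen_layer L2 ->
  all is_gen_layer (ins f j L1 L2).
Proof.
rewrite /ins => H h1 h2; move: H; rewrite (all_takedrop _ j.+1) => /andP[a b].
by rewrite !all_cat a b /= h1 h2.
Qed.

Lemma path_belast (T : eqType) (e e2 : rel T) x p :
  path e x p -> (forall a b, a \in belast x p -> b \in p -> e a b -> e2 a b) -> path e2 x p.
Proof.
elim: p x => [|y p IH] x //= /andP[h hp] H.
rewrite H ?mem_head ?inE ?eqxx //=; apply: IH => // a b ha hb; apply: H.
  by rewrite inE ha orbT.
by rewrite inE hb orbT.
Qed.

Lemma ne1 j : (j.+2 == j.+1) = false. Proof. lia. Qed.
Lemma ne2 j : (j == j.+1) = false. Proof. lia. Qed.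
Lemma ne3 j : (j.+1 == j) = false. Proof. lia. Qed.
Lemma ne4 j : (j == j.+2) = false. Proof. lia. Qed.
Lemma ne5 j : (j.+2 == j) = false. Proof. lia. Qed.
Lemma ne6 j : (j.+1 == j.+2) = false. Proof. lia. Qed.

Ltac lkc j :=
  rewrite /lk /Ed /= /leg_eqb /=; do 4 (rewrite ?eqxx ?ne1 ?ne2 ?ne3 ?ne4 ?ne5 ?ne6 /=).

Lemma lkE1 j sg t : lk (Ed j (j, sg) t) (j.+1, ~~ t) = (j.+2, t).
Proof. by case: t; case: sg; lkc j. Qed.
Lemma lkE2 j sg t : lk (Ed j (j, sg) t) (j.+2, false) = if t then (j, sg) else (j.+1, true).
Proof. by case: t; case: sg; lkc j. Qed.
Lemma lkE3 j sg t : lk (Ed j (j, sg) t) (j.+2, true) = if t then (j.+1, false) else (j, sg).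
Proof. by case: t; case: sg; lkc j. Qed.
Lemma lkE4 j sg t : lk (Ed j (j, sg) t) (j, sg) = (j.+2, ~~ t).
Proof. by case: t; case: sg; lkc j. Qed.

Lemma mE1 j sg t : [seq p <- Ed j (j, sg) t | ment (j.+1, ~~ t) p] != [::].
Proof. by case: t; case: sg; rewrite /ment; lkc j. Qed.
Lemma mE2 j sg t b : [seq p <- Ed j (j, sg) t | ment (j.+2, b) p] != [::].
Proof. by case: t; case: sg; case: b; rewrite /ment; lkc j. Qed.
Lemma mE4 j sg t : [seq p <- Ed j (j, sg) t | ment (j, sg) p] != [::].
Proof. by case: t; case: sg; rewrite /ment; lkc j. Qed.

Lemma nl_out f x y : (x, out_leg (gen_at f x)) != (y, ~~ out_leg (gen_at f y)).
Proof.
apply/eqP => -[E]; rewrite E; by case: (out_leg _).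
Qed.

Lemma nl_in f x y : (x, ~~ out_leg (gen_at f x)) != (y, out_leg (gen_at f y)).
Proof. by rewrite eq_sym nl_out. Qed.

Lemma tr f f' j l t x y :
  (forall a, partner f' (rho j l t a) = rho j l t (partner f a)) ->
  (forall z, gen_at f' (sh j z) = gen_at f z) ->
  R f x y -> (x, out_leg (gen_at f x)) != l -> (y, ~~ out_leg (gen_at f y)) != l ->
  R f' (sh j x) (sh j y).
Proof.
move=> Hpm Hg /eqP Hxy hx hy; rewrite /R !Hg.
by rewrite -(rho_other j t hx) Hpm Hxy (rho_other j t hy).
Qed.

Section InsDown.
Variables (f : diagram) (v : nat) (rest : seq nat) (k : nat) (g : gen) (t : bool)
  (gc gu : gen) (p1 p2 : nat).
Let sg := ~~ out_leg g.
Hypothesis Hall : all is_gen_layer f.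
Hypothesis Hend : endo_I f.
Hypothesis Hs : [&& uniq (v :: rest), size (v :: rest) == size f, 0 \in v :: rest,
   all (fun x => x < size f) (v :: rest) & cycle (R f) (v :: rest)].
Hypothesis Hlay : nth (LBraid 0) f v = LGen k g.
Hypothesis Hcap : is_cap g.
Hypothesis Ho : nth Up (gcod g) sg = Down.
Hypothesis Hsn : forall w1 w2 (B : seq link), size w1 = k + sg ->
  run v.+1 [:: LGen p1 gc; LGen p2 gu] (w1 ++ (Down, (v, sg)) :: w2, B) =
  Some (w1 ++ (Down, (v.+1, t)) :: w2, Ed v (v, sg) t ++ B).
Hypothesis Hgc : out_leg gc = ~~ t.
Hypothesis Hgu : out_leg gu = ~~ t.

Lemma ins_down : Good (ins f v (LGen p1 gc) (LGen p2 gu)) (map (gen_at f) (v :: rest) ++ [:: gc; gu]).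
Proof.
move: Hs => /and5P[us /eqP ss s0 sb cy].
have hv : v < size f by move: sb => /= /andP[].
have gv : gen_at f v = g by rewrite /gen_at Hlay.
have [He' Hpm Hpx] := core Hend hv Hlay Hcap Ho Hsn.
set f' := ins f v (LGen p1 gc) (LGen p2 gu).
have Hg : forall z, gen_at f' (sh v z) = gen_at f z by move=> z; apply: gen_at_sh.
have g1 : gen_at f' v.+1 = gc by apply: gen_at_1.
have g2 : gen_at f' v.+2 = gu by apply: gen_at_2.
have shv : sh v v = v by rewrite /sh leqnn.
have nlv : forall x, (x, out_leg (gen_at f x)) != (v, sg) by move=> x; rewrite /sg -gv; exact: nl_out.
split; first by apply: all_ins.
split; first exact: He'.
exists (map (sh v) (v :: rest) ++ [:: v.+1; v.+2]); split; last first.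
  by rewrite map_cat -map_comp (eq_map Hg) /= g1 g2.
set M := map (sh v) (v :: rest).
have nm1 : v.+1 \notin M.
  by apply/mapP => -[z _ /eqP]; rewrite eq_sym (negbTE (sh_neq1 _ _)).
have nm2 : v.+2 \notin M.
  by apply/mapP => -[z _ /eqP]; rewrite eq_sym (negbTE (sh_neq2 _ _)).
apply/and5P; split.
- have hh : ~~ has (mem M) [:: v.+1; v.+2].
    by apply/hasPn => z; rewrite !inE => /orP[] /eqP ->.
  by rewrite cat_uniq (map_inj_uniq (@sh_inj v)) us hh /= inE ne6.
- by rewrite size_cat size_map ss size_ins // addn2.
- by rewrite mem_cat (_ : 0 = sh v 0) // (map_f (sh v) s0).
- rewrite all_cat all_map size_ins //; apply/andP; split; last by rewrite /= !ltnS hv (ltnW hv).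
  by apply: sub_all sb => z /= /sh_lt.
rewrite /M; move: cy; rewrite /= rcons_path => /andP[pth wrap].
rewrite rcons_cat cat_path last_map path_map /=; apply/andP; split.
  apply: (path_belast (e2:=relpre (sh v) (R f')) pth) => a b _ hb hab; rewrite /relpre /=.
  apply: tr Hpm Hg hab _ _; first exact: nlv.
  rewrite /sg -gv; apply/eqP => -[eb _]; move: us; rewrite /= -eb hb.
  by [].
apply/and3P; split.
- rewrite /R Hg g1 Hgc negbK -(rho_other v t (nlv _)) Hpm.
  by move/eqP: wrap => ->; rewrite gv -/sg rho_l.
- rewrite /R g1 g2 Hgc Hgu Hpx ?lkE1 ?negbK //; first exact: rho_n1.
  exact: mE1.
- rewrite /R g2 Hg gv shv Hgu Hpx; first by case: (t); rewrite ?lkE2 ?lkE3 -/sg eqxx.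
  + by move=> a; apply: rho_n2.
  + exact: mE2.
Qed.
End InsDown.

Section InsUp.
Variables (f : diagram) (v : nat) (rest : seq nat) (k : nat) (g : gen) (t : bool)
  (gc gu : gen) (p1 p2 : nat).
Let u := last v rest.
Let sg := out_leg g.
Hypothesis Hall : all is_gen_layer f.
Hypothesis Hend : endo_I f.
Hypothesis Hs : [&& uniq (v :: rest), size (v :: rest) == size f, 0 \in v :: rest,
   all (fun x => x < size f) (v :: rest) & cycle (R f) (v :: rest)].
Hypothesis Hlay : nth (LBraid 0) f u = LGen k g.
Hypothesis Hcap : is_cap g.
Hypothesis Ho : nth Up (gcod g) sg = Up.
Hypothesis Hsn : forall w1 w2 (B : seq link), size w1 = k + sg ->
  run u.+1 [:: LGen p1 gc; LGen p2 gu] (w1 ++ (Up, (u, sg)) :: w2, B) =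
  Some (w1 ++ (Up, (u.+1, t)) :: w2, Ed u (u, sg) t ++ B).
Hypothesis Hgc : out_leg gc = t.
Hypothesis Hgu : out_leg gu = t.

Lemma ins_up : Good (ins f u (LGen p1 gc) (LGen p2 gu)) (map (gen_at f) (v :: rest) ++ [:: gu; gc]).
Proof.
move: Hs => /and5P[us /eqP ss s0 sb cy].
have hu : u < size f by move/allP: sb; apply; rewrite /u mem_last.
have gu' : gen_at f u = g by rewrite /gen_at Hlay.
have [He' Hpm Hpx] := core Hend hu Hlay Hcap Ho Hsn.
set f' := ins f u (LGen p1 gc) (LGen p2 gu).
have Hg : forall z, gen_at f' (sh u z) = gen_at f z by move=> z; apply: gen_at_sh.
have g1 : gen_at f' u.+1 = gc by apply: gen_at_1.
have g2 : gen_at f' u.+2 = gu by apply: gen_at_2.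
have shu : sh u u = u by rewrite /sh leqnn.
have nlu : forall x, (x, ~~ out_leg (gen_at f x)) != (u, sg) by move=> x; rewrite /sg -gu'; exact: nl_in.
split; first by apply: all_ins.
split; first exact: He'.
exists (map (sh u) (v :: rest) ++ [:: u.+2; u.+1]); split; last first.
  by rewrite map_cat -map_comp (eq_map Hg) /= g1 g2.
set M := map (sh u) (v :: rest).
have nm1 : u.+1 \notin M.
  by apply/mapP => -[z _ /eqP]; rewrite eq_sym (negbTE (sh_neq1 _ _)).
have nm2 : u.+2 \notin M.
  by apply/mapP => -[z _ /eqP]; rewrite eq_sym (negbTE (sh_neq2 _ _)).
apply/and5P; split.
- have hh : ~~ has (mem M) [:: u.+2; u.+1].
    by apply/hasPn => z; rewrite !inE => /orP[] /eqP ->.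
  by rewrite cat_uniq (map_inj_uniq (@sh_inj u)) us hh /= inE ne1.
- by rewrite size_cat size_map ss size_ins // addn2.
- by rewrite mem_cat (_ : 0 = sh u 0) // (map_f (sh u) s0).
- rewrite all_cat all_map size_ins //; apply/andP; split; last by rewrite /= !ltnS hu (ltnW hu).
  by apply: sub_all sb => z /= /sh_lt.
have ub : u \notin belast v rest.
  by move: us; rewrite lastI rcons_uniq => /andP[].
rewrite /M; move: cy; rewrite /= rcons_path => /andP[pth wrap].
rewrite rcons_cat cat_path last_map path_map /=; apply/andP; split.
  apply: (path_belast (e2:=relpre (sh u) (R f')) pth) => a b ha _ hab; rewrite /relpre /=.
  apply: tr Hpm Hg hab _ _; last exact: nlu.
  apply/eqP => -[ea _]; move: ub; rewrite -ea ha.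
  by [].
apply/and3P; split.
- rewrite /R g2 Hg gu' shu Hgu -/sg Hpx ?lkE4 //.
  + by move=> a; apply: rho_nl.
  + exact: mE4.
- rewrite /R g1 g2 Hgc Hgu Hpx; first by case: (t); rewrite ?lkE2 ?lkE3.
  + by move=> a; apply: rho_n2.
  + exact: mE2.
- rewrite /R g1 Hg Hgc -(rho_l u (u, sg) t) Hpm /sg -gu'.
  move/eqP: wrap => ->; rewrite (rho_other u t) ?eqxx //; exact: nl_in.
Qed.
End InsUp.

Definition alt (x y : gen) := is_cap x != is_cap y.

Lemma layer_at f x : all is_gen_layer f -> x < size f ->
  exists k, nth (LBraid 0) f x = LGen k (gen_at f x).
Proof.
move=> Hall hx; have := all_nthP (LBraid 0) Hall x hx.
rewrite /gen_at; case: (nth (LBraid 0) f x) => // k g _; by exists k.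
Qed.

Lemma Good_ins f d a b : Good f d -> cycle alt (d ++ [:: a; b]) ->
  (tn a + tn b = 0)%R -> exists f', Good f' (d ++ [:: a; b]).
Proof.
case=> Hall [Hend [s [Hs Ec]]].
move: (Hs) => /and5P[_ _ s0 sb _].
case: s s0 Hs sb Ec => [//|v rest] _ Hs sb Ec.
have hv : v < size f by move: sb => /= /andP[].
have hu : last v rest < size f by move/allP: sb; apply; rewrite mem_last.
rewrite -Ec /= rcons_cat cat_path last_map /= => /andP[_ /and3P[alu aab abv]].
have [kv Ev] := layer_at Hall hv.
have [ku Eu] := layer_at Hall hu.
move: alu abv aab; rewrite /alt.
case: a; case: b => //= alu abv _ Htn.
all: try by [].
- have EE : gen_at f v = cap_r \/ gen_at f v = cap_l by move: abv; case: (gen_at f v) => //= _; auto.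
  case: EE => Eg; rewrite Eg in Ev.
  + eexists; apply: (@ins_down f v rest kv cap_r true cap_r cup_r (kv + ~~ out_leg cap_r).+1 (kv + ~~ out_leg cap_r)) => //.
    by move=> w1 w2 B <-; apply: snA.
  + eexists; apply: (@ins_down f v rest kv cap_l true cap_r cup_r (kv + ~~ out_leg cap_l).+1 (kv + ~~ out_leg cap_l)) => //.
    by move=> w1 w2 B <-; apply: snA.
- have EE : gen_at f v = cap_r \/ gen_at f v = cap_l by move: abv; case: (gen_at f v) => //= _; auto.
  case: EE => Eg; rewrite Eg in Ev.
  + eexists; apply: (@ins_down f v rest kv cap_r false cap_l cup_l (kv + ~~ out_leg cap_r) (kv + ~~ out_leg cap_r).+1) => //.
    by move=> w1 w2 B <-; apply: snB.
  + eexists; apply: (@ins_down f v rest kv cap_l false cap_l cup_l (kv + ~~ out_leg cap_l) (kv + ~~ out_leg cap_l).+1) => //.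
    by move=> w1 w2 B <-; apply: snB.
- have EE : gen_at f (last v rest) = cap_r \/ gen_at f (last v rest) = cap_l.
    by move: alu; case: (gen_at f (last v rest)) => //= _; auto.
  case: EE => Eg; rewrite Eg in Eu.
  + eexists; apply: (@ins_up f v rest ku cap_r false cap_r cup_r (ku + out_leg cap_r) (ku + out_leg cap_r).+1) => //.
    by move=> w1 w2 B <-; apply: snD.
  + eexists; apply: (@ins_up f v rest ku cap_l false cap_r cup_r (ku + out_leg cap_l) (ku + out_leg cap_l).+1) => //.
    by move=> w1 w2 B <-; apply: snD.
- have EE : gen_at f (last v rest) = cap_r \/ gen_at f (last v rest) = cap_l.
    by move: alu; case: (gen_at f (last v rest)) => //= _; auto.
  case: EE => Eg; rewrite Eg in Eu.
  + eexists; apply: (@ins_up f v rest ku cap_r true cap_l cup_l (ku + out_leg cap_r).+1 (ku + out_leg cap_r)) => //.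
    by move=> w1 w2 B <-; apply: snC.
  + eexists; apply: (@ins_up f v rest ku cap_l true cap_l cup_l (ku + out_leg cap_l).+1 (ku + out_leg cap_l)) => //.
    by move=> w1 w2 B <-; apply: snC.
Qed.

Import GRing.Theory.

Lemma ccycle_alt c : is_ccycle c -> cycle alt c.
Proof.
move=> H; case: c H => [//|x c'] H.
rewrite (cycle_path x); apply/(pathP x) => i hi.
case: i hi => [|i] hi /=.
  have := H (size c') (ltnSn _).
  by rewrite /= modnn /alt (last_nth x) (set_nth_default cap_r x) //=.
have := H i (ltnW hi); rewrite modn_small //= /alt.
by rewrite (set_nth_default cap_r x (ltnW hi)) (set_nth_default cap_r x (hi : i < size c')).
Qed.

Lemma turning_cat c1 c2 : turning (c1 ++ c2) = (turning c1 + turning c2)%R.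
Proof. by rewrite /turning big_cat. Qed.

Lemma turning_rot k c : turning (rot k c) = turning c.
Proof. by rewrite /rot turning_cat addrC -turning_cat cat_take_drop. Qed.

Lemma tn_eq a b : (tn a + tn b != 0)%R -> tn a = tn b.
Proof. by case: a; case: b. Qed.

Lemma split_or_const c : (exists l1 l2 a b, c = l1 ++ a :: b :: l2 /\ (tn a + tn b = 0)%R)
  \/ all (fun x => tn x == tn (head cap_r c)) c.
Proof.
elim: c => [|x c IH]; first by right.
case: IH => [[l1 [l2 [a [b [E H]]]]]|H].
  by left; exists (x :: l1), l2, a, b; rewrite E.
case: c H => [|y c] H; first by right; rewrite /= eqxx.
case: (eqVneq (tn x + tn y)%R 0) => hxy.
  by left; exists [::], c, x, y.
right; rewrite /= eqxx /=; rewrite (tn_eq hxy); exact: H.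
Qed.

Lemma cycle_alt_drop (d : seq gen) a b : 0 < size d -> cycle alt (d ++ [:: a; b]) -> cycle alt d.
Proof.
case: d => [//|x d] _; rewrite /= rcons_cat cat_path /= rcons_path => /andP[-> /and4P[h1 h2 h3 _]] /=.
move: h1 h2 h3; rewrite /alt.
by case: (is_cap (last x d)); case: (is_cap a); case: (is_cap b); case: (is_cap x).
Qed.

Lemma base c : size c = 2 -> cycle alt c -> all (fun x => tn x == tn (head cap_r c)) c ->
  exists f, Good f c.
Proof.
case: c => [|a [|b [|]]] //= _.
case: a; case: b => //= _ _.
- exists [:: LGen 0 cap_r; LGen 0 cup_l]; split => //; split => //.
  by exists [:: 0; 1]; split; vm_compute.
- exists [:: LGen 0 cap_l; LGen 0 cup_r]; split => //; split => //.
  by exists [:: 0; 1]; split; vm_compute.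
- exists [:: LGen 0 cap_l; LGen 0 cup_r]; split => //; split => //.
  by exists [:: 1; 0]; split; vm_compute.
- exists [:: LGen 0 cap_r; LGen 0 cup_l]; split => //; split => //.
  by exists [:: 1; 0]; split; vm_compute.
Qed.

Lemma turning_const c t : all (fun x => tn x == t) c -> turning c = (t *+ size c)%R.
Proof.
elim: c => [|x c IH] /=; first by rewrite /turning big_nil.
by case/andP=> /eqP hx /IH hc; rewrite /turning big_cons -/(turning c) hc hx mulrS.
Qed.

Lemma turning2 a b : turning [:: a; b] = (tn a + tn b)%R.
Proof. by rewrite /turning !big_cons big_nil addr0. Qed.

Lemma main_ind n : forall c, size c <= n -> cycle alt c ->
  (turning c = 2%R \/ turning c = (-2)%R) -> exists f, Good f c.
Proof.
elim: n => [|n IH] c hc cy ht.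
  by case: c hc ht cy => // _; rewrite /turning big_nil; case.
case: (split_or_const c) => [[l1 [l2 [a [b [E H]]]]] | H].
  set d := l2 ++ l1.
  set k := size (l1 ++ [:: a; b]).
  have Er : rot k c = d ++ [:: a; b].
    by rewrite E (_ : l1 ++ a :: b :: l2 = (l1 ++ [:: a; b]) ++ l2) ?rot_size_cat /d -?catA.
  have cy' : cycle alt (d ++ [:: a; b]) by rewrite -Er rot_cycle.
  have td : turning d = turning c.
    by rewrite -(turning_rot k c) Er turning_cat turning2 H addr0.
  have dpos : 0 < size d.
    case: (d) td => // /esym; rewrite /turning big_nil => E0; move: ht; rewrite /turning E0; case=> //.
  have szc : size c = (size d).+2 by rewrite E /d !size_cat /= addnC; lia.
  have [f Gf] : exists f, Good f d.
    apply: IH; first by move: hc; rewrite szc; lia.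
      exact: cycle_alt_drop cy'.
    by rewrite td.
  have [f' Gf'] := Good_ins Gf cy' H.
  exists f'; rewrite -(rotK k c) Er; exact: Good_rotr.
apply: base => //.
move: ht; rewrite (turning_const H).
case: c H {IH hc cy} => [|h c] H //=; first by rewrite mulr0n; case.
case: h H => /= _; rewrite ?mulNrn natz; lia.
Qed.

Theorem mainTheorem3 (c : seq gen) :
  is_ccycle c -> (turning c = 2%R \/ turning c = (-2)%R) ->
  exists f : diagram, [/\ is_knot f, crossing_free f & cyc_eq c (ccc f)].
Proof.
move=> hc ht.
have [f Gf] := main_ind (leqnn (size c)) (ccycle_alt hc) ht.
exact: Good_concl Gf.
Qed.
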